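(* For any two POPs $p$ and $q$, $p+q\sim q+p$.
   Context: A partially ordered pattern (POP) $p$ of size $k$ is a partial order $\le_p$ on $[k]=\{1,\dots,k\}$. A permutation $\pi=\pi_1\cdots\pi_n$ contains $p$ if there are indices $i_1<\dots<i_k$ with $\pi_{i_j}<\pi_{i_m}$ whenever $j<_p m$; otherwise it avoids $p$. $\mathfrak S_n(p)$ is the set of permutations of $[n]$ avoiding $p$, and $p\sim q$ (Wilf-equivalence) means $|\mathfrak S_n(p)|=|\mathfrak S_n(q)|$ for all $n\ge 1$. For a POP $p$ of size $k$ and a POP $q$ of size $l$, the disjoint sum $p+q$ is the POP of size $k+l$ on $[k+l]$ in which $i\le j$ for $i,j\in[k]$ iff $i\le_p j$, $k+i\le k+j$ for $i,j\in[l]$ iff $i\le_q j$, and no element of $[k]$ is comparable with an element of $[k+1,k+l]$. *)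

(* Defs.v *)
From mathcomp Require Import all_boot all_fingroup.
Set Implicit Arguments. Unset Strict Implicit. Unset Printing Implicit Defensive.

(* A POP of size k: a partial order (reflexive, antisymmetric, transitive,
   boolean relation) on 'I_k, representing [k] = {1,..,k} shifted to {0,..,k-1}. *)
Definition is_pop (k : nat) (p : rel 'I_k) : Prop :=
  reflexive p /\ antisymmetric p /\ transitive p.

Definition pop_lt (k : nat) (p : rel 'I_k) (j m : 'I_k) : bool := (j != m) && p j m.

Definition contains (k n : nat) (p : rel 'I_k) (pi : {perm 'I_n}) : bool :=
  [exists i : {ffun 'I_k -> 'I_n},
    [forall j : 'I_k, forall m : 'I_k, (j < m) ==> (i j < i m)] &&
    [forall j : 'I_k, forall m : 'I_k, pop_lt p j m ==> (pi (i j) < pi (i m))]].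

Definition avoids (k n : nat) (p : rel 'I_k) (pi : {perm 'I_n}) : bool :=
  ~~ contains p pi.

Definition num_avoiders (k n : nat) (p : rel 'I_k) : nat :=
  #|[set pi : {perm 'I_n} | avoids p pi ]|.

Definition wilf_equiv (k l : nat) (p : rel 'I_k) (q : rel 'I_l) : Prop :=
  forall n : nat, 1 <= n -> num_avoiders n p = num_avoiders n q.

Definition pop_sum (k l : nat) (p : rel 'I_k) (q : rel 'I_l) : rel 'I_(k + l) :=
  fun a b =>
    match split a, split b with
    | inl a', inl b' => p a' b'
    | inr a', inr b' => q a' b'
    | _, _ => false
    end.

(* Main.v *)
Require Import Defs.
From mathcomp Require Import all_boot all_fingroup.
From mathcomp Require Import zify.
Set Implicit Arguments. Unset Strict Implicit. Unset Printing Implicit Defensive.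
Definition contI k n (p : rel 'I_k) (pi : {perm 'I_n}) (lo hi : nat) : bool :=
 [exists i : {ffun 'I_k -> 'I_n}, [&& [forall j : 'I_k, forall m : 'I_k, (j < m) ==> (i j < i m)],
   [forall j : 'I_k, lo <= i j < hi] &
   [forall j : 'I_k, forall m : 'I_k, pop_lt p j m ==> (pi (i j) < pi (i m))]]].

Lemma transfer k n (p : rel 'I_k) (pi pi' : {perm 'I_n}) (r : 'I_n -> 'I_n) lo hi lo' hi' :
 (forall x, pi' x = pi (r x)) ->
 (forall x : 'I_n, lo <= x < hi -> lo' <= r x < hi') ->
 (forall x y : 'I_n, lo <= x < hi -> lo <= y < hi -> x < y -> r x < r y) ->
 contI p pi' lo hi -> contI p pi lo' hi'.
Proof.
move=> hpi hr hm /existsP[i /and3P[/forallP a /forallP b /forallP c]].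
apply/existsP; exists [ffun j => r (i j)]; apply/and3P; split.
- apply/forallP=> x; apply/forallP=> y; apply/implyP=> xy; rewrite !ffunE.
  by apply: hm; [exact: b | exact: b | have /forallP/(_ y)/implyP := a x; apply].
- by apply/forallP=> x; rewrite ffunE; apply: hr; exact: b.
- apply/forallP=> x; apply/forallP=> y; apply/implyP=> xy; rewrite !ffunE -!hpi.
  by have /forallP/(_ y)/implyP := c x; apply.
Qed.

Lemma contI_mono k n (p : rel 'I_k) (pi : {perm 'I_n}) lo hi lo' hi' :
  lo' <= lo -> hi <= hi' -> contI p pi lo hi -> contI p pi lo' hi'.
Proof.
move=> h1 h2 /existsP[i /and3P[a /forallP b c]].
apply/existsP; exists i; rewrite a c andbT /=; apply/forallP=> x.
have /andP[u v] := b x; apply/andP; split; [exact: leq_trans u | exact: leq_trans h2].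
Qed.

Definition mkf n (f : nat -> nat) (y : 'I_n) : 'I_n := insubd y (f y).

Lemma mkf_val n (f : nat -> nat) (y : 'I_n) :
  (forall y, y < n -> f y < n) -> val (mkf f y) = f y.
Proof. by move=> hb; rewrite /mkf val_insubd hb. Qed.

Lemma mkf_inj n (f : nat -> nat) :
  (forall y, y < n -> f y < n) ->
  (forall x y, x < n -> y < n -> f x = f y -> x = y) -> injective (@mkf n f).
Proof.
move=> hb hi x y /(congr1 val); rewrite !mkf_val // => e.
by apply: val_inj; apply: hi (ltn_ord x) (ltn_ord y) e.
Qed.

Definition fX n m y := if y + m < n then y + m else y + m - n.
Definition fY n m y := if y + m.+1 < n then y + m.+1
                      else if y + m.+1 == n then m else y + m - n.

Lemma fX_b n m y : m <= n -> y < n -> fX n m y < n.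
Proof. rewrite /fX; case: ifP => h; lia. Qed.
Lemma fX_i n m x y : m <= n -> x < n -> y < n -> fX n m x = fX n m y -> x = y.
Proof. rewrite /fX; case: ifP => h1; case: ifP => h2; lia. Qed.
Lemma fY_b n m y : m < n -> y < n -> fY n m y < n.
Proof. rewrite /fY; case: ifP => h; [lia|case: ifP => /eqP h'; lia]. Qed.
Lemma fY_i n m x y : m < n -> x < n -> y < n -> fY n m x = fY n m y -> x = y.
Proof.
rewrite /fY; case: ifP => h1; [|case: ifP => /eqP h1']; case: ifP => h2;
  try case: ifP => /eqP h2'; lia.
Qed.

Lemma cardX k l n m (p : rel 'I_k) (q : rel 'I_l) : m <= n ->
  #|[set pi : {perm 'I_n} | ~~ contI p pi 0 m && ~~ contI q pi m n]| <=
  #|[set pi : {perm 'I_n} | ~~ contI q pi 0 (n - m) && ~~ contI p pi (n - m) n]|.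
Proof.
move=> mn.
have hb : forall y, y < n -> fX n m y < n by move=> y; apply: fX_b.
pose R := perm (mkf_inj hb (fun x y => fX_i mn)).
rewrite -(card_imset _ (mulgI R)); apply: subset_leq_card.
apply/subsetP => _ /imsetP[pi hpi ->]; rewrite inE in hpi; rewrite inE.
case/andP: hpi => hp hq.
have hR : forall x, (R * pi)%g x = pi (mkf (fX n m) x).
  by move=> x; rewrite permM permE.
apply/andP; split.
- apply: contra hq; apply: (transfer hR) => [x|x y]; rewrite ?mkf_val // /fX;
    case: ifP; try case: ifP; lia.
- apply: contra hp; apply: (transfer hR) => [x|x y]; rewrite ?mkf_val // /fX;
    have := ltn_ord x; try have := ltn_ord y; case: ifP; try case: ifP; lia.
Qed.

Lemma cardY k l n m (p : rel 'I_k) (q : rel 'I_l) : m < n ->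
  #|[set pi : {perm 'I_n} | ~~ contI p pi 0 m && ~~ contI q pi m.+1 n]| <=
  #|[set pi : {perm 'I_n} | ~~ contI q pi 0 (n - m.+1) && ~~ contI p pi (n - m.+1).+1 n]|.
Proof.
move=> mn.
have hb : forall y, y < n -> fY n m y < n by move=> y; apply: fY_b.
pose R := perm (mkf_inj hb (fun x y => fY_i mn)).
rewrite -(card_imset _ (mulgI R)); apply: subset_leq_card.
apply/subsetP => _ /imsetP[pi hpi ->]; rewrite inE in hpi; rewrite inE.
case/andP: hpi => hp hq.
have hR : forall x, (R * pi)%g x = pi (mkf (fY n m) x).
  by move=> x; rewrite permM permE.
apply/andP; split.
- apply: contra hq; apply: (transfer hR) => [x|x y]; rewrite ?mkf_val // /fY;
    have := ltn_ord x; try have := ltn_ord y;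
    case: ifP; try case: ifP => /eqP; try case: ifP; try case: ifP => /eqP; lia.
- apply: contra hp; apply: (transfer hR) => [x|x y]; rewrite ?mkf_val // /fY;
    have := ltn_ord x; try have := ltn_ord y;
    case: ifP; try case: ifP => /eqP; try case: ifP; try case: ifP => /eqP; lia.
Qed.
Lemma contains_contI k n (p : rel 'I_k) (pi : {perm 'I_n}) :
  contains p pi = contI p pi 0 n.
Proof.
apply/existsP/existsP => [[i /andP[h1 h2]]|[i /and3P[h1 _ h2]]]; exists i.
  by rewrite h1 h2 andbT /=; apply/forallP => j; rewrite ltn_ord.
by rewrite h1 h2.
Qed.

Lemma split_l k l (j : 'I_k) : split (lshift l j) = inl j.
Proof. exact: (unsplitK (inl _ j)). Qed.
Lemma split_r k l (j : 'I_l) : split (rshift k j) = inr j.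
Proof. exact: (unsplitK (inr _ j)). Qed.

Lemma sum_contI k l n (p : rel 'I_k) (q : rel 'I_l) (pi : {perm 'I_n}) :
  contains (pop_sum p q) pi =
  has (fun m => contI p pi 0 m && contI q pi m n) (iota 0 n.+1).
Proof.
apply/existsP/hasP.
- move=> [i /andP[/forallP h1 /forallP h2]].
  have inc : forall a b : 'I_(k+l), a < b -> i a < i b.
    by move=> a b ab; have /forallP/(_ b)/implyP := h1 a; apply.
  set m := (\max_(j : 'I_k) (i (lshift l j)).+1).
  have hm1 : forall j, i (lshift l j) < m.
    by move=> j; rewrite /m (bigD1 j) //= leq_maxl.
  have hm2 : forall j, m <= i (rshift k j).
    move=> j; apply/bigmax_leqP => j' _; apply: inc => /=; have := ltn_ord j'; lia.
  exists m.
    rewrite mem_iota add0n ltnS; apply/bigmax_leqP => j _; exact: ltn_ord.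
  apply/andP; split.
    apply/existsP; exists [ffun j => i (lshift l j)]; apply/and3P; split.
    + apply/forallP=> a; apply/forallP=> b; apply/implyP=> ab; rewrite !ffunE.
      by apply: inc.
    + by apply/forallP=> a; rewrite ffunE hm1.
    + apply/forallP=> a; apply/forallP=> b; apply/implyP=> ab; rewrite !ffunE.
      have /forallP/(_ (lshift l b))/implyP := h2 (lshift l a); apply.
      move: ab; rewrite /pop_lt /pop_sum !split_l => /andP[ne ->].
      by rewrite andbT; apply: contra ne => /eqP/lshift_inj ->.
  apply/existsP; exists [ffun j => i (rshift k j)]; apply/and3P; split.
  + apply/forallP=> a; apply/forallP=> b; apply/implyP=> ab; rewrite !ffunE.
    by apply: inc => /=; lia.
  + by apply/forallP=> a; rewrite ffunE hm2 ltn_ord.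
  + apply/forallP=> a; apply/forallP=> b; apply/implyP=> ab; rewrite !ffunE.
    have /forallP/(_ (rshift k b))/implyP := h2 (rshift k a); apply.
    move: ab; rewrite /pop_lt /pop_sum !split_r => /andP[ne ->].
    by rewrite andbT; apply: contra ne => /eqP/rshift_inj ->.
- move=> [m _ /andP[/existsP[i1 /and3P[/forallP a1 /forallP b1 /forallP c1]]
                   /existsP[i2 /and3P[/forallP a2 /forallP b2 /forallP c2]]]].
  exists [ffun x => match split x with inl j => i1 j | inr j => i2 j end].
  apply/andP; split.
  + apply/forallP=> x; apply/forallP=> y; apply/implyP=> xy; rewrite !ffunE.
    case: splitP xy => j -> ; case: splitP => j' -> xy.
    * by have /forallP/(_ j')/implyP := a1 j; apply.
    * by have /andP[_ u] := b1 j; have /andP[v _] := b2 j'; apply: leq_trans u v.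
    * by have := ltn_ord j'; lia.
    * by have /forallP/(_ j')/implyP := a2 j; apply; lia.
  + apply/forallP=> x; apply/forallP=> y; apply/implyP; rewrite !ffunE /pop_lt /pop_sum.
    case: splitP => j ex; case: splitP => j' ey /= /andP[ne pj].
    * have /forallP/(_ j')/implyP := c1 j; apply; rewrite /pop_lt pj andbT.
      by apply: contra ne => /eqP e; apply/eqP/val_inj; rewrite /= ex ey e.
    * by [].
    * by [].
    * have /forallP/(_ j')/implyP := c2 j; apply; rewrite /pop_lt pj andbT.
      by apply: contra ne => /eqP e; apply/eqP/val_inj; rewrite /= ex ey e.
Qed.
Lemma key5 (cn f0 f1 g0 g1 : bool) : (f1 -> f0) -> (g0 -> g1) -> (f0 -> cn) ->
  (cn -> f0 || g0) ->
  (cn && (f1||g1)) + (f1 && g1) + f0 = cn + f1 + (f0 && g1).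
Proof.
by case: cn; case: f0; case: f1; case: g0; case: g1 => //= h1 h2 h3 h4;
  try (by have := h1 isT); try (by have := h2 isT); try (by have := h3 isT);
  try (by have := h4 isT).
Qed.

Definition cc (F G : nat -> bool) n := all (fun m => F m || G m) (iota 0 n.+1).

Lemma thresh (F G : nat -> bool) n :
 (forall a b, a <= b -> F b -> F a) -> (forall a b, a <= b -> G a -> G b) ->
 cc F G n + \sum_(m < n.+1) (F m && G m) = F n + G 0 + \sum_(m < n) (F m && G m.+1).
Proof.
move=> hF hG; elim: n => [|n IH].
  rewrite big_ord1 big_ord0 /cc /=; by case: (F 0); case: (G 0).
have e : cc F G n.+1 = cc F G n && (F n.+1 || G n.+1).
  by rewrite /cc -addn1 iotaD all_cat /= andbT.
have h3 : F n -> cc F G n.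
  move=> Fn; apply/allP => m; rewrite mem_iota add0n ltnS => /= hm.
  by rewrite (hF _ _ hm Fn).
have h4 : cc F G n -> F n || G n.
  by move=> /allP /(_ n); rewrite mem_iota add0n ltnS leqnn; apply.
have := key5 (hF n n.+1 (leqnSn n)) (hG n n.+1 (leqnSn n)) h3 h4.
move=> K; rewrite e [in LHS]big_ord_recr [in RHS]big_ord_recr /=; move: K.
move=> K; move: IH K. set a := (\sum_(i < n.+1) _). set b := (\sum_(i < n) _). set c := cc F G n. move: (F n.+1 && G n.+1) (F n && G n.+1) (F n.+1 || G n.+1) => u v w. move: (c && w) => z. move: (F n.+1) (F n) (G 0) => x y t. lia.
Qed.

Lemma cardP_sum n (B : pred {perm 'I_n}) : #|[set pi | B pi]| = \sum_pi B pi.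
Proof.
rewrite -sum1_card big_mkcond /=; apply: eq_bigr => pi _; rewrite inE.
by case: (B pi).
Qed.

Definition XX k l n (p : rel 'I_k) (q : rel 'I_l) :=
  \sum_(m < n.+1) #|[set pi : {perm 'I_n} | ~~ contI p pi 0 m && ~~ contI q pi m n]|.
Definition YY k l n (p : rel 'I_k) (q : rel 'I_l) :=
  \sum_(m < n) #|[set pi : {perm 'I_n} | ~~ contI p pi 0 m && ~~ contI q pi m.+1 n]|.

Lemma XX_le k l n (p : rel 'I_k) (q : rel 'I_l) : XX n p q <= XX n q p.
Proof.
rewrite /XX [X in _ <= X](reindex_inj rev_ord_inj) /=.
apply: leq_sum => m _; rewrite subSS; apply: cardX.
by rewrite -ltnS ltn_ord.
Qed.

Lemma YY_le k l n (p : rel 'I_k) (q : rel 'I_l) : YY n p q <= YY n q p.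
Proof.
rewrite /YY [X in _ <= X](reindex_inj rev_ord_inj) /=.
apply: leq_sum => m _.
have mn := ltn_ord m.
have e : (n - m.+1).+1 = n - m by lia.
exact: cardY.
Qed.

Lemma main_eq k l n (p : rel 'I_k) (q : rel 'I_l) :
  num_avoiders n (pop_sum p q) + XX n p q =
  num_avoiders n p + num_avoiders n q + YY n p q.
Proof.
rewrite /num_avoiders /XX /YY !cardP_sum.
under [X in _ + X = _]eq_bigr do rewrite cardP_sum.
under [X in _ = _ + X]eq_bigr do rewrite cardP_sum.
rewrite (exchange_big _ _ (index_enum _)) /=.
rewrite [in RHS](exchange_big _ _ (index_enum _)) /=.
rewrite -!big_split /=; apply: eq_bigr => pi _.
have hF : forall a b, a <= b -> ~~ contI p pi 0 b -> ~~ contI p pi 0 a.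
  by move=> a b ab; apply: contra; apply: contI_mono.
have hG : forall a b, a <= b -> ~~ contI q pi a n -> ~~ contI q pi b n.
  by move=> a b ab; apply: contra; apply: contI_mono.
have := @thresh _ _ n hF hG.
rewrite /avoids sum_contI !contains_contI /cc -all_predC.
have -> : all (fun m => ~~ contI p pi 0 m || ~~ contI q pi m n) (iota 0 n.+1) =
  all (predC (fun m => contI p pi 0 m && contI q pi m n)) (iota 0 n.+1).
  by apply: eq_all => m /=; rewrite negb_and.
by move=> ->.
Qed.

Theorem theorem1p5 (k l : nat) (p : rel 'I_k) (q : rel 'I_l) :
  is_pop p -> is_pop q ->
  wilf_equiv (pop_sum p q) (pop_sum q p).
Proof.
move=> _ _ n _.
have h1 := main_eq n p q.
have h2 := main_eq n q p.
have eX : XX n p q = XX n q p by apply/eqP; rewrite eqn_leq !XX_le.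
have eY : YY n p q = YY n q p by apply/eqP; rewrite eqn_leq !YY_le.
lia.
Qed.
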